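(* Let $t\ge 1$ be an integer and $n=2t^2+2t+1$. Let $\mathcal{C}_0\subseteq\mathbb{Z}_n^2$ be a linear $t$-error-correcting perfect code with generator matrix $G=[a~~b]$, and let $\mathcal{C}=\mathbf{x}+\mathcal{C}_0$ for some $\mathbf{x}=(x_1,x_2)\in\mathbb{Z}_n^2$. Let $\mathcal{S}$ be the set of all perfect Sudoku grids with respect to $\mathcal{C}$, and let \[ \mathcal{G}_\mathcal{S}=\langle \tau_2^{x_1+x_2+1}\tau_1^{x_1-x_2}r,\ \tau_1^a\tau_2^b\rangle. \] Then for every $S\in\mathcal{S}$ and every $g\in\mathcal{G}_\mathcal{S}$, we have $g\cdot S\in\mathcal{S}$.
   Context: $\mathbb{Z}_n$ is the integers modulo $n$; Lee weight of $\mathbf{u}\in\mathbb{Z}_n^2$ is $\sum_i\min\{u_i,n-u_i\}$ and Lee distance $d_L(\mathbf{u},\mathbf{v})=\mathrm{wt}_L(\mathbf{u}-\mathbf{v})$. A linear code is a submodule of $\mathbb{Z}_n^2$; a generator matrix is a matrix whose rows form a minimal spanning set. A code with minimum Lee distance $d$ is a perfect code if, with $t=\lfloor (d-1)/2\rfloor$, the Lee balls $\mathcal{B}_t(\mathbf{c})$ of radius $t$ around the codewords cover $\mathbb{Z}_n^2$ (they are then pairwise disjoint); it is $t$-error-correcting if $d\ge 2t+1$. For $n=2t^2+2t+1$, each ball of radius $t$ in $\mathbb{Z}_n^2$ has $n$ points, so such a perfect code has $n$ codewords. A palette grid is an $n\times n$ array with entries in $[n]=\{1,\dots,n\}$ in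 which each symbol occurs exactly $n$ times. Two $n\times n$ arrays with entries in an $n$-set are orthogonal if the $n^2$ ordered pairs of corresponding entries are all distinct. A Sudoku grid with respect to a palette grid $\mathcal{I}$ is a Latin square of order $n$ on $[n]$ orthogonal to $\mathcal{I}$. For a $t$-error-correcting perfect code $\mathcal{C}=\{\mathbf{c}_1,\dots,\mathbf{c}_n\}\subseteq\mathbb{Z}_n^2$, the palette grid $\mathcal{I}_\mathcal{C}$ has rows and columns indexed by $\mathbb{Z}_n$ and entry $i$ at every position $(x,y)\in\mathcal{B}_t(\mathbf{c}_i)$ ($x$ = row, $y$ = column); a perfect Sudoku grid with respect to $\mathcal{C}$ is a Sudoku grid with respect to $\mathcal{I}_\mathcal{C}$. Maps on $n\times n$ arrays $A$ (indices in $\mathbb{Z}_n$): $(r(A))_{i,j}=A_{n-1-j,i}$ (rotation), $(\tau_1(A))_{i,j}=A_{i-1,j}$, $(\tau_2(A))_{i,j}=A_{i,j-1}$ (translations); the group they generate acts on arrays by $\varphi\cdot A=\varphi(A)$ with composition of maps. *)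

(* Defs.v *)
From HB Require Import structures.
From mathcomp Require Import all_boot all_order all_algebra all_fingroup.
From mathcomp Require Import ring.
Set Implicit Arguments. Unset Strict Implicit. Unset Printing Implicit Defensive.
Import GRing.Theory.
Local Open Scope ring_scope.

(* Points of Z_n^2: first component = row x, second = column y. *)
Definition point (n : nat) := ('Z_n * 'Z_n)%type.

Definition leeZ (n : nat) (u : 'Z_n) : nat := minn (val u) (n - val u).
Arguments leeZ : clear implicits.
Definition leeW (n : nat) (u : point n) : nat := (leeZ n u.1 + leeZ n u.2)%N.
Arguments leeW : clear implicits.
Definition leeD (n : nat) (u v : point n) : nat := leeW n (u.1 - v.1, u.2 - v.2).

Arguments leeD : clear implicits.

Definition ball (n t : nat) (c : point n) : {set point n} :=
  [set p | (leeD n p c <= t)%N].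

Arguments ball : clear implicits.

Definition linear_code (n : nat) (C : {set point n}) : Prop :=
  [/\ (0, 0) \in C,
      forall u v, u \in C -> v \in C -> (u.1 + v.1, u.2 + v.2) \in C
    & forall (k : 'Z_n) u, u \in C -> (k * u.1, k * u.2) \in C].

(* The 1x2 matrix [a b] is a generator matrix of C: its single row spans C
   and this spanning set is minimal (the row is nonzero). *)
Definition gen_row (n : nat) (C : {set point n}) (a b : 'Z_n) : Prop :=
  C = [set (k * a, k * b) | k : 'Z_n] /\ ((a != 0) || (b != 0)).

Definition min_lee_dist (n : nat) (C : {set point n}) (d : nat) : Prop :=
  (exists c1 c2, [/\ c1 \in C, c2 \in C, c1 != c2 & leeD n c1 c2 = d])
  /\ (forall c1 c2, c1 \in C -> c2 \in C -> c1 != c2 -> (d <= leeD n c1 c2)%N).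

Definition t_perfect_code (n : nat) (C : {set point n}) (t : nat) : Prop :=
  exists d : nat, [/\ min_lee_dist C d, (2 * t + 1 <= d)%N, (d.-1)./2 = t
                   & forall p : point n, exists2 c, c \in C & p \in ball n t c].

Definition transl (n : nat) (x : point n) (C : {set point n}) : {set point n} :=
  [set (x.1 + c.1, x.2 + c.2) | c in C].

(* n x n arrays with entries in an n-set (symbols [n] relabelled as 'I_n). *)
Definition grid (n : nat) := {ffun point n -> 'I_n}.

(* Latin square: each symbol occurs exactly once in each row and column
   (injectivity of each row/column map between n-element sets). *)
Definition latin (n : nat) (L : grid n) : Prop :=
  (forall i : 'Z_n, injective (fun j : 'Z_n => L (i, j))) /\
  (forall j : 'Z_n, injective (fun i : 'Z_n => L (i, j))).

Definition orthogonal (n : nat) (A B : Type) (X : point n -> A) (Y : point n -> B) :=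
  injective (fun p => (X p, Y p)).

(* Palette grid of a code: the entry at p is the (label of the) codeword
   whose radius-t ball contains p; codewords themselves serve as symbols. *)
Definition palette (n t : nat) (C : {set point n}) (p : point n) : option (point n) :=
  [pick c in C | p \in ball n t c].

Definition perfect_sudoku (n t : nat) (C : {set point n}) (S : grid n) : Prop :=
  latin S /\ orthogonal (fun p => S p) (palette t C).

Definition rotF (n : nat) (A : grid n) : grid n := [ffun p => A (-1 - p.2, p.1)].
Definition rotI (n : nat) (A : grid n) : grid n := [ffun p => A (p.2, -1 - p.1)].
Definition tau1F (n : nat) (A : grid n) : grid n := [ffun p => A (p.1 - 1, p.2)].
Definition tau1I (n : nat) (A : grid n) : grid n := [ffun p => A (p.1 + 1, p.2)].
Definition tau2F (n : nat) (A : grid n) : grid n := [ffun p => A (p.1, p.2 - 1)].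
Definition tau2I (n : nat) (A : grid n) : grid n := [ffun p => A (p.1, p.2 + 1)].

Lemma rotK n : cancel (@rotF n) (@rotI n).
Proof.
move=> A; apply/ffunP => -[i j]; rewrite !ffunE /=; congr (A (_, _)).
by rewrite opprB addrC subrK.
Qed.
Lemma tau1K n : cancel (@tau1F n) (@tau1I n).
Proof. by move=> A; apply/ffunP => -[i j]; rewrite !ffunE /= addrK. Qed.
Lemma tau2K n : cancel (@tau2F n) (@tau2I n).
Proof. by move=> A; apply/ffunP => -[i j]; rewrite !ffunE /= addrK. Qed.

Definition rP (n : nat) : {perm grid n} := perm (can_inj (@rotK n)).
Definition tau1P (n : nat) : {perm grid n} := perm (can_inj (@tau1K n)).
Definition tau2P (n : nat) : {perm grid n} := perm (can_inj (@tau2K n)).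

(* G_S = < tau2^(x1+x2+1) tau1^(x1-x2) r , tau1^a tau2^b >, where maps are
   composed as functions (rightmost applied first).  In MathComp's
   permutation group, (p * q) x = q (p x), so the map
   tau2^k o tau1^m o r is the permutation r * tau1^m * tau2^k. *)
Definition GS (n : nat) (x : point n) (a b : 'Z_n) : {set {perm grid n}} :=
  <<[set (rP n * tau1P n ^+ val (x.1 - x.2) * tau2P n ^+ val (x.1 + x.2 + 1))%g;
         (tau1P n ^+ val a * tau2P n ^+ val b)%g]>>%g.

(* Main.v *)
Require Import Defs.
From mathcomp Require Import all_boot all_order all_algebra all_fingroup.
From HB Require Import structures.
From mathcomp Require Import ring zify.
Set Implicit Arguments. Unset Strict Implicit. Unset Printing Implicit Defensive.
Import GRing.Theory Num.Theory.
Local Open Scope ring_scope.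

Lemma zn_val_lt n (n1 : (1 < n)%N) (z : 'Z_n) : (val z < n)%N.
Proof. have h := ltn_ord z; by rewrite -[X in (_ < X)%N](Zp_cast n1). Qed.

Lemma zn_valZ n (n1 : (1 < n)%N) k : \val (k%:R : 'Z_n) = (k %% n)%N.
Proof. exact: val_Zp_nat. Qed.

Lemma zn_natr_val n (n1 : (1 < n)%N) (z : 'Z_n) : (val z)%:R = z.
Proof. by apply: val_inj; rewrite /= val_Zp_nat // modn_small // zn_val_lt. Qed.

Lemma zn_opp_natr n (n1 : (1 < n)%N) (z : 'Z_n) : (n - val z)%:R = - z.
Proof.
rewrite natrB; last by apply: ltnW; apply: zn_val_lt.
by rewrite pchar_Zp // sub0r zn_natr_val.
Qed.

Lemma leeZ_opp n (n1 : (1 < n)%N) (z : 'Z_n) : leeZ n (- z) = leeZ n z.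
Proof.
rewrite -(zn_opp_natr n1) /leeZ zn_valZ //.
have hz := zn_val_lt n1 z.
have [hz0|hp] := posnP (\val z).
  by rewrite hz0 subn0 modnn subn0.

rewrite modn_small; last by lia.
rewrite subKn; last by lia.
by rewrite minnC.
Qed.

Lemma leeZ_le n (n1 : (1 < n)%N) (z : 'Z_n) (Z : int) : z = Z%:~R -> (leeZ n z <= absz Z)%N.
Proof.
have pos : forall (y : 'Z_n) k, y = k%:R -> (leeZ n y <= k)%N.
  move=> y k ->; rewrite /leeZ zn_valZ //.
  by apply: leq_trans (geq_minl _ _) (leq_mod _ _).
case: Z => k /= hz.
  exact: pos.
rewrite -(opprK z) leeZ_opp //; apply: pos.
by rewrite hz opprK.
Qed.

Lemma leeZ_rep n (n1 : (1 < n)%N) (z : 'Z_n) : exists Z : int, z = Z%:~R /\ absz Z = leeZ n z.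
Proof.
have hz := zn_val_lt n1 z.
case: (leqP (val z) (n - val z)) => h.
  exists (Posz (val z)); split; first by rewrite -pmulrn zn_natr_val.
  move: hz h; rewrite /leeZ /=; change (\val z) with (nat_of_ord z); lia.
exists (- Posz (n - val z)); split.
  by rewrite mulrNz -pmulrn zn_opp_natr // opprK.
move: hz h; rewrite /leeZ abszN /=; change (\val z) with (nat_of_ord z); lia.
Qed.

Lemma zn_intr_inj n (n1 : (1 < n)%N) (Z Z' : int) :
  (Z%:~R : 'Z_n) = Z'%:~R -> (absz (Z - Z') < n)%N -> Z = Z'.
Proof.
move=> e hlt; apply/eqP; rewrite -subr_eq0; apply/eqP.
have e0 : ((Z - Z')%:~R : 'Z_n) = 0 by rewrite intrB e subrr.
move: e0 hlt; case: (Z - Z') => k /= e0 hlt.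
  have := congr1 val e0; rewrite zn_valZ // modn_small //= => ->; done.
have : ((k.+1)%:R : 'Z_n) = 0 by move: e0; rewrite NegzE mulrNz -pmulrn => /eqP; rewrite oppr_eq0 => /eqP.
move/(congr1 val); rewrite zn_valZ // modn_small //.
Qed.

Lemma leeZ_add n (n1 : (1 < n)%N) (x y : 'Z_n) : (leeZ n (x + y)%R <= leeZ n x + leeZ n y)%N.
Proof.
have [X [hX eX]] := leeZ_rep n1 x.
have [Y [hY eY]] := leeZ_rep n1 y.
have h : x + y = (X + Y)%:~R by rewrite intrD -hX -hY.
have := leeZ_le n1 h.
rewrite -eX -eY; lia.
Qed.


Lemma leeD_sym n (n1 : (1 < n)%N) (p c : point n) : leeD n p c = leeD n c p.
Proof.
rewrite /leeD /leeW /= -(leeZ_opp n1 (c.1 - p.1)) -(leeZ_opp n1 (c.2 - p.2)).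
by rewrite !opprB.
Qed.

Lemma leeD_tri n (n1 : (1 < n)%N) (p c c' : point n) :
  (leeD n c c' <= leeD n p c + leeD n p c')%N.
Proof.
rewrite /leeD /leeW /=.
have e1 : c.1 - c'.1 = - (p.1 - c.1) + (p.1 - c'.1) by ring.
have e2 : c.2 - c'.2 = - (p.2 - c.2) + (p.2 - c'.2) by ring.
rewrite e1 e2.
have h1 := leeZ_add n1 (- (p.1 - c.1)) (p.1 - c'.1).
have h2 := leeZ_add n1 (- (p.2 - c.2)) (p.2 - c'.2).
rewrite !leeZ_opp // in h1 h2.
by apply: leq_trans (leq_add h1 h2) _; rewrite addnACA.
Qed.

Definition ucover n t (C : {set point n}) :=
  (forall p, exists2 c, c \in C & p \in ball n t c) /\
  (forall p c c', c \in C -> c' \in C -> p \in ball n t c -> p \in ball n t c' -> c = c').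

Lemma palE n t (C : {set point n}) p c : ucover t C -> c \in C -> p \in ball n t c ->
  palette t C p = Some c.
Proof.
move=> [_ hu] hc hb; rewrite /palette.
case: pickP => [c' /andP[hc' hb'] | H].
  by rewrite (hu p c' c).
by move: (H c); rewrite hc hb.
Qed.

Lemma orth_preserve n (n1 : (1 < n)%N) t (C : {set point n}) (phi : point n -> point n) (S S' : grid n) :
  ucover t C -> injective phi -> (forall c, c \in C -> phi c \in C) ->
  (forall p q, leeD n (phi p) (phi q) = leeD n p q) ->
  (forall p, S' p = S (phi p)) ->
  Defs.orthogonal (fun p => S p) (palette t C) -> Defs.orthogonal (fun p => S' p) (palette t C).
Proof.
move=> hU hinj hC hD hS hO p q /= [eS eP]; rewrite !hS in eS.
have [hcov _] := hU.
have [cp hcp hbp] := hcov p.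
have [cq hcq hbq] := hcov q.
have pp : forall r c, c \in C -> r \in ball n t c -> palette t C (phi r) = Some (phi c).
  move=> r c hc hb; apply: palE => //; first exact: hC.
  by move: hb; rewrite /ball !inE hD.
move: eP; rewrite (palE hU hcp hbp) (palE hU hcq hbq) => -[ecpq].
apply: hinj; apply: hO => /=; rewrite eS (pp _ _ hcp hbp) (pp _ _ hcq hbq) ecpq //.
Qed.

Lemma transl_ucover n (n1 : (1 < n)%N) t (C0 : {set point n}) (x : point n) :
  t_perfect_code C0 t -> ucover t (transl x C0).
Proof.
move=> [d [[_ hmd] hd _ hcov]]; split.
  move=> p; have [c0 hc0 hb] := hcov (p.1 - x.1, p.2 - x.2).
  exists (x.1 + c0.1, x.2 + c0.2); first by apply/imsetP; exists c0.
  move: hb; rewrite /ball !inE /leeD /leeW /=.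
  have -> : p.1 - (x.1 + c0.1) = p.1 - x.1 - c0.1 by ring.
  by have -> : p.2 - (x.2 + c0.2) = p.2 - x.2 - c0.2 by ring.
move=> p c c' /imsetP[c0 hc0 ->] /imsetP[c0' hc0' ->].
rewrite /ball !inE => hb hb'.
have [-> //|hne] := eqVneq c0 c0'.
have := hmd _ _ hc0 hc0' hne.
have := leeD_tri n1 p (x.1 + c0.1, x.2 + c0.2) (x.1 + c0'.1, x.2 + c0'.2).
rewrite {1}/leeD /leeW /=.
have -> : x.1 + c0.1 - (x.1 + c0'.1) = c0.1 - c0'.1 by ring.
have -> : x.2 + c0.2 - (x.2 + c0'.2) = c0.2 - c0'.2 by ring.
rewrite /leeD /leeW /= in hb hb' *.
move=> h1 h2; exfalso; have := leq_trans h2 (leq_trans h1 (leq_add hb hb')); lia.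
Qed.


Lemma cover_form n (n1 : (1 < n)%N) t (C0 : {set point n}) d
  (hmd : forall c1 c2, c1 \in C0 -> c2 \in C0 -> c1 != c2 -> (d <= leeD n c1 c2)%N)
  (hd : (2 * t + 1 <= d)%N) (h0 : (0, 0) \in C0) (hn : (2 * t + 2 < n)%N)
  (s : int) (hs : absz s = 1%N) (c : point n) (hc : c \in C0)
  (hb : (leeD n ((t%:Z)%:~R, s%:~R) c <= t)%N) :
  exists U W : int, [/\ c = ((t%:Z - U)%:~R, (s - W)%:~R), (absz U + absz W <= t)%N
                      & (2 * t + 1 <= absz (t%:Z - U) + absz (s - W))%N].
Proof.
have [U [hU eU]] := leeZ_rep n1 ((t%:Z)%:~R - c.1).
have [W [hW eW]] := leeZ_rep n1 (s%:~R - c.2).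
move: hb; rewrite /leeD /leeW /= -eU -eW => hb.
have e1 : c.1 = (t%:Z - U)%:~R by rewrite intrB -hU; ring.
have e2 : c.2 = (s - W)%:~R by rewrite intrB -hW; ring.
have ec : c = ((t%:Z - U)%:~R, (s - W)%:~R) by rewrite -e1 -e2; case: c {hc hU hW e1 e2 eU eW}.
exists U, W; split => //.
have hne : c != (0, 0).
  apply/eqP => c0.
  have z1 : ((t%:Z - U)%:~R : 'Z_n) = (0%:Z)%:~R by rewrite -e1 c0.
  have z2 : ((s - W)%:~R : 'Z_n) = (0%:Z)%:~R by rewrite -e2 c0.
  have := zn_intr_inj n1 z1; have := zn_intr_inj n1 z2; lia.
have := hmd _ _ hc h0 hne.
rewrite /leeD /leeW /= !subr0.
have := leeZ_le n1 e1; have := leeZ_le n1 e2; lia.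
Qed.

Lemma two_cover n (n1 : (1 < n)%N) t (C0 : {set point n}) d
  (hmd : forall c1 c2, c1 \in C0 -> c2 \in C0 -> c1 != c2 -> (d <= leeD n c1 c2)%N)
  (hd : (2 * t + 1 <= d)%N) (h0 : (0, 0) \in C0) (hn : (2 * t + 2 < n)%N)
  (hcov : forall p : point n, exists2 c, c \in C0 & p \in ball n t c) :
  ((t%:Z)%:~R, (1 + t%:Z)%:~R) \in C0 \/ ((t%:Z)%:~R, (-1 - t%:Z)%:~R) \in C0.
Proof.
have [c1 hc1 hb1] := hcov ((t%:Z)%:~R, (1%:Z)%:~R).
have [c2 hc2 hb2] := hcov ((t%:Z)%:~R, (-1%:Z)%:~R).
rewrite /ball inE in hb1; rewrite /ball inE in hb2.
have [U1 [W1 [e1 b1 l1]]] := cover_form (s := 1%Z) n1 hmd hd h0 hn (erefl _) hc1 hb1.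
have [U2 [W2 [e2 b2 l2]]] := cover_form (s := (-1)%Z) n1 hmd hd h0 hn (erefl _) hc2 hb2.
have [eq12|ne12] := eqVneq c1 c2.
  have : ((1 - W1)%:~R : 'Z_n) = (-1 - W2)%:~R.
    by have := congr1 snd eq12; rewrite e1 e2.
  move/zn_intr_inj => /(_ n1); lia.
have := hmd _ _ hc1 hc2 ne12.
rewrite /leeD /leeW e1 e2 /= -!intrB.
have := leeZ_le n1 (erefl (((t%:Z - U1) - (t%:Z - U2))%:~R : 'Z_n)).
have := leeZ_le n1 (erefl (((1%Z - W1) - ((-1)%Z - W2))%:~R : 'Z_n)).
move=> h1 h2 h3.
have [[hU hW]|[hU hW]] : (U1 = 0 /\ W1 = - t%:Z) \/ (U2 = 0 /\ W2 = t%:Z) by lia.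
  by left; move: hc1; rewrite e1 hU hW subr0 opprK.
by right; move: hc2; rewrite e2 hU hW subr0.
Qed.

Lemma rot_from_w n (C0 : {set point n}) (a b : 'Z_n)
  (hlin : linear_code C0) (hgen : gen_row C0 a b) (w : point n) (hw : w \in C0)
  (m : 'Z_n) (hm1 : m * w.1 = - w.2) (hm2 : m * w.2 = w.1)
  (hinj : forall k k' : 'Z_n, k * w.1 = k' * w.1 -> k * w.2 = k' * w.2 -> k = k') :
  forall c, c \in C0 -> (- c.2, c.1) \in C0.
Proof.
have [_ _ hsc] := hlin.
set Sw := [set (k * w.1, k * w.2) | k : 'Z_n].
have sub : Sw \subset C0 by apply/subsetP => _ /imsetP[k _ ->]; exact: hsc.
have cS : #|Sw| = #|'Z_n|.
  rewrite card_imset // => k k' e; apply: hinj; [exact: (congr1 fst e) | exact: (congr1 snd e)].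
have cC : (#|C0| <= #|'Z_n|)%N.
  by rewrite hgen.1; apply: leq_imset_card.
have eq : Sw = C0 by apply/eqP; rewrite eqEcard sub cS cC.
move=> c; rewrite -eq => /imsetP[k _ ->] /=.
have -> : - (k * w.2) = (k * m) * w.1 by rewrite -mulrA hm1 mulrN.
have -> : k * w.1 = (k * m) * w.2 by rewrite -mulrA hm2.
rewrite eq; exact: hsc.
Qed.

Lemma rot_inv t n (ht : (1 <= t)%N) (hn : n = (2 * t ^ 2 + 2 * t + 1)%N)
  (C0 : {set point n}) (a b : 'Z_n)
  (hlin : linear_code C0) (hgen : gen_row C0 a b) (hperf : t_perfect_code C0 t) :
  forall c, c \in C0 -> (- c.2, c.1) \in C0.
Proof.
have n1 : (1 < n)%N by rewrite hn; lia.
have hn2 : (2 * t + 2 < n)%N by rewrite hn; nia.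
have [d [[_ hmd] hd _ hcov]] := hperf.
have [h0 _ _] := hlin.
set T : 'Z_n := t%:R.
have hN : 2%:R * T ^+ 2 + 2%:R * T + 1 = 0.
  have : ((2 * t ^ 2 + 2 * t + 1)%N%:R : 'Z_n) = 0 by rewrite -hn; exact: pchar_Zp.
  by rewrite !(natrD, natrM, natrX).
have eT : ((t%:Z)%:~R : 'Z_n) = T by rewrite -pmulrn.
have [hw|hw] := two_cover n1 hmd hd h0 hn2 hcov.
- move: hw; rewrite intrD eT => hw.
  apply: (rot_from_w hlin hgen hw (m := 2%:R * T + 1)) => /=.
  + apply: subr0_eq; rewrite -hN; ring.
  + apply: subr0_eq; rewrite -hN; ring.
  + move=> k k' e1 e2.
    have -> : k = k * (1%:~R + T) - k * T by ring.
    by rewrite e1 e2; ring.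
- move: hw; rewrite intrB eT => hw.
  apply: (rot_from_w hlin hgen hw (m := - (2%:R * T + 1))) => /=.
  + apply: subr0_eq; rewrite -[0]oppr0 -hN; ring.
  + apply: subr0_eq; rewrite -hN; ring.
  + move=> k k' e1 e2.
    have -> : k = - (k * ((-1)%:~R - T)) - k * T by ring.
    by rewrite e1 e2; ring.
Qed.


Lemma tau1_pow n m (A : grid n) : (tau1P n ^+ m)%g A = [ffun p => A (p.1 - m%:R, p.2)].
Proof.
elim: m => [|m IH].
  by rewrite expg0 perm1; apply/ffunP => -[i j]; rewrite ffunE subr0.
rewrite expgSr permM IH /tau1P permE; apply/ffunP => -[i j]; rewrite !ffunE /=.
by congr (A (_, _)); rewrite mulrS; ring.
Qed.

Lemma tau2_pow n m (A : grid n) : (tau2P n ^+ m)%g A = [ffun p => A (p.1, p.2 - m%:R)].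
Proof.
elim: m => [|m IH].
  by rewrite expg0 perm1; apply/ffunP => -[i j]; rewrite ffunE subr0.
rewrite expgSr permM IH /tau2P permE; apply/ffunP => -[i j]; rewrite !ffunE /=.
by congr (A (_, _)); rewrite mulrS; ring.
Qed.

Lemma g1E n (n1 : (1 < n)%N) (x : point n) (S : grid n) :
  (rP n * tau1P n ^+ val (x.1 - x.2) * tau2P n ^+ val (x.1 + x.2 + 1))%g S
  = [ffun p => S (-1 - (p.2 - (x.1 + x.2 + 1)), p.1 - (x.1 - x.2))].
Proof.
rewrite !permM tau1_pow tau2_pow /rP permE; apply/ffunP => p; rewrite !ffunE !zn_natr_val //.
Qed.

Lemma g2E n (n1 : (1 < n)%N) (a b : 'Z_n) (S : grid n) :
  (tau1P n ^+ val a * tau2P n ^+ val b)%g S = [ffun p => S (p.1 - a, p.2 - b)].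
Proof.
rewrite !permM tau1_pow tau2_pow; apply/ffunP => p; rewrite !ffunE !zn_natr_val //.
Qed.

Lemma latin_swap n (S S' : grid n) (f g : 'Z_n -> 'Z_n) :
  injective f -> injective g -> (forall p, S' p = S (f p.2, g p.1)) -> latin S -> latin S'.
Proof.
move=> hf hg hS [hr hc]; split.
  by move=> i j j'; rewrite !hS /= => /hc /hf.
by move=> j i i'; rewrite !hS /= => /hr /hg.
Qed.

Lemma latin_straight n (S S' : grid n) (f g : 'Z_n -> 'Z_n) :
  injective f -> injective g -> (forall p, S' p = S (f p.1, g p.2)) -> latin S -> latin S'.
Proof.
move=> hf hg hS [hr hc]; split.
  by move=> i j j'; rewrite !hS /= => /hr /hg.
by move=> j i i'; rewrite !hS /= => /hc /hf.
Qed.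


Lemma pres_g1 t n (ht : (1 <= t)%N) (hn : n = (2 * t ^ 2 + 2 * t + 1)%N)
  (C0 : {set point n}) (a b : 'Z_n)
  (hlin : linear_code C0) (hgen : gen_row C0 a b) (hperf : t_perfect_code C0 t)
  (x : point n) (S : grid n) :
  perfect_sudoku t (transl x C0) S ->
  perfect_sudoku t (transl x C0)
    ((rP n * tau1P n ^+ val (x.1 - x.2) * tau2P n ^+ val (x.1 + x.2 + 1))%g S).
Proof.
have n1 : (1 < n)%N by rewrite hn; lia.
rewrite (g1E n1).
set K := x.1 + x.2 + 1; set M := x.1 - x.2.
set f := fun j : 'Z_n => -1 - (j - K).
set g := fun i : 'Z_n => i - M.
have hf : injective f.
  move=> j j' e; have -> : j = K - 1 - f j by rewrite /f; ring.
  by rewrite e /f; ring.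
have hg : injective g.
  move=> j j' e; have -> : j = g j + M by rewrite /g; ring.
  by rewrite e /g; ring.
move=> [hL hO]; split.
  by apply: (latin_swap hf hg) hL => p; rewrite ffunE.
move: hO; apply: (@orth_preserve n n1 t _ (fun p => (f p.2, g p.1))) => //.
- exact: transl_ucover.
- move=> [i j] [i' j'] e; congr pair; [apply: hg; exact: (congr1 snd e) | apply: hf; exact: (congr1 fst e)].
- move=> _ /imsetP[c0 hc0 ->]; apply/imsetP; exists (- c0.2, c0.1).
    exact: (rot_inv ht hn hlin hgen hperf).
  by rewrite /f /g /K /M /=; congr pair; ring.
- move=> p q; rewrite /leeD /leeW /= /f /g.
  have -> : -1 - (p.2 - K) - (-1 - (q.2 - K)) = - (p.2 - q.2) by ring.
  have -> : p.1 - M - (q.1 - M) = p.1 - q.1 by ring.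
  by rewrite leeZ_opp // addnC.
- by move=> p; rewrite ffunE.
Qed.

Lemma pres_g2 t n (ht : (1 <= t)%N) (hn : n = (2 * t ^ 2 + 2 * t + 1)%N)
  (C0 : {set point n}) (a b : 'Z_n)
  (hlin : linear_code C0) (hgen : gen_row C0 a b) (hperf : t_perfect_code C0 t)
  (x : point n) (S : grid n) :
  perfect_sudoku t (transl x C0) S ->
  perfect_sudoku t (transl x C0) ((tau1P n ^+ val a * tau2P n ^+ val b)%g S).
Proof.
have n1 : (1 < n)%N by rewrite hn; lia.
rewrite (g2E n1).
set f := fun j : 'Z_n => j - a.
set g := fun i : 'Z_n => i - b.
have hf : injective f.
  move=> j j' e; have -> : j = f j + a by rewrite /f; ring.
  by rewrite e /f; ring.
have hg : injective g.
  move=> j j' e; have -> : j = g j + b by rewrite /g; ring.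
  by rewrite e /g; ring.
have [_ hadd hsc] := hlin.
have hab : (a, b) \in C0.
  by rewrite hgen.1; apply/imsetP; exists 1; rewrite ?mul1r.
move=> [hL hO]; split.
  by apply: (latin_straight hf hg) hL => p; rewrite ffunE.
move: hO; apply: (@orth_preserve n n1 t _ (fun p => (f p.1, g p.2))) => //.
- exact: transl_ucover.
- move=> [i j] [i' j'] e; congr pair; [apply: hf; exact: (congr1 fst e) | apply: hg; exact: (congr1 snd e)].
- move=> _ /imsetP[c0 hc0 ->]; apply/imsetP; exists (c0.1 + (-1) * a, c0.2 + (-1) * b).
    by apply: (hadd c0 ((-1) * a, (-1) * b)) => //; exact: (hsc (-1) (a, b)).
  by rewrite /f /g /=; congr pair; ring.
- move=> p q; rewrite /leeD /leeW /= /f /g.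
  have -> : p.1 - a - (q.1 - a) = p.1 - q.1 by ring.
  by have -> : p.2 - b - (q.2 - b) = p.2 - q.2 by ring.
- by move=> p; rewrite ffunE.
Qed.

Local Close Scope ring_scope.

Theorem mainTheorem2 (t n : nat) (ht : (1 <= t)%N) (hn : n = (2 * t ^ 2 + 2 * t + 1)%N)
  (C0 : {set point n}) (a b : 'Z_n)
  (hlin : linear_code C0) (hgen : gen_row C0 a b) (hperf : t_perfect_code C0 t)
  (x : point n) :
  forall (S : grid n) (g : {perm grid n}),
    perfect_sudoku t (transl x C0) S ->
    g \in GS x a b ->
    perfect_sudoku t (transl x C0) (g S).
Proof.
move=> S g hS /gen_prodgP [k [c hc ->]].
elim: k c hc S hS => [|k IH] c hc S hS.
  by rewrite big_ord0 perm1.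
rewrite big_ord_recr /= permM.
have hS' := IH (fun i => c (widen_ord (leqnSn k) i)) (fun i => hc _) S hS.
have := hc ord_max; rewrite !inE => /orP[] /eqP ->.
  exact: (pres_g1 ht hn hlin hgen hperf).
exact: (pres_g2 ht hn hlin hgen hperf).
Qed.
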